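(* Let $p_0>p_1>p_2\geq\ldots\geq p_N$ be reals in $[0,1]$ with $p_0-p_1=p_1-p_2$. Define $\mathbf{p}^0,\ldots,\mathbf{p}^N\in[0,1]^N$ by $\mathbf{p}^0_i=p_i$ for $1\le i\le N$, and for $1\le j\le N$, $\mathbf{p}^j_i=p_i$ ($i\ne j$), $\mathbf{p}^j_j=p_0$. Then for all $1\leq j\leq N$, $$\frac14H(\mathbf{p}^0)\leq H(\mathbf{p}^j)\leq 2H(\mathbf{p}^0).$$
   Context: For a vector $\mathbf{q}$ with a unique largest entry $q_{i^*}$, $H(\mathbf{q})=\sum_{i\neq i^*}(q_{i^*}-q_i)^{-2}$. Thus $H(\mathbf{p}^0)=\sum_{i\ge2}(p_1-p_i)^{-2}$ and $H(\mathbf{p}^j)=\sum_{i\ne j}(p_0-p_i)^{-2}$ for $j\ge1$. *)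

(* Defs.v *)
From mathcomp Require Import all_boot all_order all_algebra.
From mathcomp Require Import reals.
Set Implicit Arguments. Unset Strict Implicit. Unset Printing Implicit Defensive.
Import Order.TTheory GRing.Theory Num.Theory.
Local Open Scope ring_scope.

Definition unique_argmax (R : realType) (n : nat) (q : 'I_n -> R) (k : 'I_n) : bool :=
  [forall i, (i != k) ==> (q i < q k)].

(* H(q) = sum_{i <> i*} (q_{i*} - q_i)^{-2}, where i* is the index of the unique
   largest entry; (conventionally 0 if q has no unique largest entry, a case that
   never arises in the statement). *)
Definition H (R : realType) (n : nat) (q : 'I_n -> R) : R :=
  match [pick k | unique_argmax q k] with
  | Some k => \sum_(i < n | i != k) (q k - q i) ^- 2
  | None => 0
  end.

(* Vectors in [0,1]^N; coordinate i : 'I_N stands for the index i+1 in 1..N. *)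
Definition pvec0 (R : realType) (N : nat) (p : nat -> R) : 'I_N -> R :=
  fun i => p i.+1.

Definition pvec (R : realType) (N : nat) (p : nat -> R) (j : 'I_N) : 'I_N -> R :=
  fun i => if i == j then p 0%N else p i.+1.
Arguments pvec0 {R} N p i.

(* Main.v *)
Require Import Defs.
From mathcomp Require Import all_boot all_order all_algebra.
From mathcomp Require Import reals.
From mathcomp Require Import ring lra.
Import Order.TTheory GRing.Theory Num.Theory.
Local Open Scope ring_scope.

Lemma invsq_le (R : realType) (a b : R) : 0 < a -> a <= b -> b ^- 2 <= a ^- 2.
Proof.
move=> a0 ab.
have b0 : 0 < b by apply: lt_le_trans ab.
rewrite lef_pV2 ?posrE ?exprn_gt0 //.
rewrite !expr2; nra.
Qed.

Lemma invsq_quarter (R : realType) (a d : R) : 0 < d -> d <= a ->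
  a ^- 2 / 4 <= (d + a) ^- 2.
Proof.
move=> d0 da.
have a0 : 0 < a by apply: lt_le_trans da.
have -> : a ^- 2 / 4 = (2 * a) ^- 2.
  by field; rewrite gt_eqF.
apply: invsq_le; lra.
Qed.

Lemma H_eq (R : realType) (n : nat) (q : 'I_n -> R) (k : 'I_n) :
  unique_argmax q k -> H q = \sum_(i < n | i != k) (q k - q i) ^- 2.
Proof.
move=> hk; rewrite /H; case: pickP => [k' hk' | hn]; last by rewrite hn in hk.
suff -> : k' = k by [].
apply/eqP; apply/negPn/negP => ne.
move/forallP: hk => /(_ k') /implyP /(_ ne) h1.
move/forallP: hk' => /(_ k) /implyP; rewrite eq_sym => /(_ ne) h2.
by have := lt_trans h1 h2; rewrite ltxx.
Qed.

Lemma invsq_ge0 (R : realType) (a : R) : 0 <= a ^- 2.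
Proof. by rewrite invr_ge0 exprn_even_ge0. Qed.

Theorem lemma7 (R : realType) (N : nat) (p : nat -> R)
  (hN : (2 <= N)%N)
  (h01 : forall i, (i <= N)%N -> 0 <= p i <= 1)
  (hp01 : p 1%N < p 0%N) (hp12 : p 2%N < p 1%N)
  (hmono : forall i, (2 <= i)%N -> (i < N)%N -> p i.+1 <= p i)
  (harith : p 0%N - p 1%N = p 1%N - p 2%N) :
  forall j : 'I_N,
    H (pvec0 N p) / 4 <= H (pvec p j) /\ H (pvec p j) <= 2 * H (pvec0 N p).
Proof.
move=> j.
set d := p 0%N - p 1%N.
have d0 : 0 < d by rewrite /d; lra.
have hle2 : forall m, (2 <= m)%N -> (m <= N)%N -> p m <= p 2%N.
  elim=> [//|m IH] h2 hm.
  case: (ltngtP 2 m.+1) h2 => // [lt2 _ | <- _]; last by [].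
  apply: le_trans (hmono m _ _) (IH _ _); by [|apply: ltnW].
have hgap : forall i : 'I_N, val i != 0%N -> d <= p 1%N - p i.+1.
  move=> i i0.
  have h2 : (1 < i.+1)%N by rewrite ltnS lt0n.
  have := hle2 i.+1 h2 (ltn_ord i) => h; rewrite /d harith; lra.
have N0 : (0 < N)%N by apply: leq_trans hN.
have N1 : (1 < N)%N by [].
pose k0 : 'I_N := Ordinal N0.
pose k1 : 'I_N := Ordinal N1.
pose f (i : 'I_N) := (p 0%N - p i.+1) ^- 2.
pose g (i : 'I_N) := (p 1%N - p i.+1) ^- 2.
have HN0 : H (pvec0 N p) = \sum_(i < N | i != k0) g i.
  rewrite (@H_eq _ _ _ k0) //.
  apply/forallP => i; apply/implyP => ik.
  rewrite /pvec0 /=.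
  have : val i != 0%N by [].
  move/hgap; lra.
have Hj : H (pvec p j) = \sum_(i < N | i != j) f i.
  rewrite (@H_eq _ _ _ j).
    by apply: eq_bigr => i /negPf ij; rewrite /pvec eqxx ij.
  apply/forallP => i; apply/implyP => ij; rewrite /pvec eqxx (negPf ij).
  case: (eqVneq (val i) 0%N) => [i0|i0]; first by rewrite i0.
  move/hgap: i0; lra.
have fg : forall i : 'I_N, i != k0 -> f i <= g i /\ g i / 4 <= f i.
  move=> i ik.
  have := hgap i ik => h; rewrite /f /g.
  have -> : p 0%N - p i.+1 = d + (p 1%N - p i.+1) by rewrite /d; lra.
  split; [apply: invsq_le; lra | exact: invsq_quarter].
have gd : forall i : 'I_N, i != k0 -> g i <= d ^- 2.
  by move=> i ik; apply: invsq_le => //; apply: hgap.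
have fk0 : f k0 = d ^- 2 by [].
have gk1 : g k1 = d ^- 2 by rewrite /g /= -harith.
rewrite HN0 Hj; split.
- case: (eqVneq j k0) => [->|jk0].
    rewrite mulr_suml; apply: ler_sum => i ik; exact: (fg i ik).2.
  rewrite [X in _ <= X](bigD1 k0) 1?eq_sym //= [X in X / 4](bigD1 j) //= mulrDl mulr_suml.
  apply: lerD.
    rewrite fk0; apply: le_trans (gd j jk0); have := @invsq_ge0 _ (p 1%N - p j.+1).
    rewrite -/(g j); lra.
  rewrite (eq_bigl (fun i => (i != j) && (i != k0))); last by move=> i; rewrite andbC.
  apply: ler_sum => i /andP [_ ik]; exact: (fg i ik).2.
- apply: le_trans (_ : \sum_(i < N) f i <= _).
    rewrite [X in _ <= X](bigD1 j) //= lerDr; exact: invsq_ge0.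
  rewrite (bigD1 k0) //= fk0 mulr2n mulrDl mul1r.
  apply: lerD.
    rewrite -gk1 (bigD1 k1) //= lerDl; apply: sumr_ge0 => i _; exact: invsq_ge0.
  apply: ler_sum => i ik; exact: (fg i ik).1.
Qed.
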